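(* Let $\alpha,\beta\in(0,1)$, and let $u\in C([0,1],L(\mathbb{R}^n,\mathbb{R}^m))$, $v\in\mathcal{C}^\alpha(L(\mathbb{R}^d,\mathbb{R}^n))$ and $w\in\mathcal{C}^\beta(\mathbb{R}^d)$. Then \[ \|\pi_<(u,\pi_<(v,w))-\pi_<(uv,w)\|_{\alpha+\beta}\lesssim\|u\|_\infty\|v\|_\alpha\|w\|_\beta. \]
   Context: Index set: pairs $(p,m)$ with either $p=-1,m=0$, or $p\in\mathbb{N}=\{0,1,2,\dots\}$ and $0\le m\le 2^p$. For $p\in\mathbb{N}$, $1\le m\le 2^p$ set $t^0_{pm}=(m-1)2^{-p}$, $t^1_{pm}=(2m-1)2^{-p-1}$, $t^2_{pm}=m2^{-p}$. Rescaled Haar functions: for $p\in\mathbb{N}$, $1\le m\le 2^p$, $\chi_{pm}=2^p$ on $[t^0_{pm},t^1_{pm})$, $=-2^p$ on $[t^1_{pm},t^2_{pm})$, $=0$ elsewhere; $\chi_{00}\equiv1$; $\chi_{p0}\equiv0$ for $p\ge1$. Rescaled Schauder functions: $\varphi_{pm}(t)=\int_0^t\chi_{pm}(s)\,ds$ for $p\in\mathbb{N}$, and $\varphi_{-10}\equiv1$. For continuous $f:[0,1]\to E$ ($E$ a finite-dimensional normed space), coefficients: $f_{-10}=f(0)$, $f_{00}=f(1)-f(0)$, $f_{p0}=0$ for $p\ge1$, $f_{pm}=2f(t^1_{pm})-f(t^0_{pm})-f(t^2_{pm})$ for $p\in\mathbb{N},m\ge1$. Schauder blocks: $\Delta_pf=\sum_{m=0}^{2^p}f_{pm}\varphi_{pm}$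 ($p\ge-1$), $S_pf=\sum_{q=-1}^p\Delta_qf$. For $\alpha>0$, $\|f\|_\alpha:=\sup_{p,m}2^{p\alpha}|f_{pm}|$ and $\mathcal{C}^\alpha(E):=\{f\in C([0,1],E):\|f\|_\alpha<\infty\}$. Paraproduct: $\pi_<(v,w):=\sum_{p\ge0}S_{p-1}v\,\Delta_pw$ (products are compositions/applications of linear maps). $\|\cdot\|_\infty$ is the sup norm; $\lesssim$ hides a constant depending only on $\alpha,\beta$. *)

(* Defs.v *)
From Stdlib Require Import Reals ZArith ClassicalEpsilon.
Open Scope R_scope.

(* Elements of L(R^c, R^r) are r x c real matrices; vectors of R^d are d x 1
   matrices.  Entries outside the dimensions are irrelevant. *)
Definition Mat := nat -> nat -> R.

Fixpoint rsum (n : nat) (f : nat -> R) : R :=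
  match n with O => 0 | S n' => rsum n' f + f n' end.

Fixpoint rmaxn (n : nat) (f : nat -> R) : R :=
  match n with O => 0 | S n' => Rmax (rmaxn n' f) (f n') end.

Definition madd (A B : Mat) : Mat := fun i j => A i j + B i j.
Definition msub (A B : Mat) : Mat := fun i j => A i j - B i j.
Definition mscal (a : R) (A : Mat) : Mat := fun i j => a * A i j.
Definition mzero : Mat := fun _ _ => 0.
Definition mmul (k : nat) (A B : Mat) : Mat :=
  fun i j => rsum k (fun l => A i l * B l j).
Definition msum (N : nat) (F : nat -> Mat) : Mat :=
  fun i j => rsum N (fun q => F q i j).

(* Norm on L(R^c,R^r): the operator norm induced by the sup norms on R^c and
   R^r (max absolute row sum).  For c = 1 it is the sup norm on R^r. *)
Definition mnorm (r c : nat) (A : Mat) : R :=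
  rmaxn r (fun i => rsum c (fun j => Rabs (A i j))).

Definition cont01 (r c : nat) (f : R -> Mat) : Prop :=
  forall i j, (i < r)%nat -> (j < c)%nat ->
  forall t, 0 <= t <= 1 -> forall eps, eps > 0 ->
    exists delta, delta > 0 /\
      forall s, 0 <= s <= 1 -> Rabs (s - t) < delta ->
        Rabs (f s i j - f t i j) < eps.

Definition sup_bound (r c : nat) (f : R -> Mat) (K : R) : Prop :=
  forall t, 0 <= t <= 1 -> mnorm r c (f t) <= K.

Definition t0 (p m : nat) : R := (INR m - 1) / 2 ^ p.
Definition t1 (p m : nat) : R := (2 * INR m - 1) / 2 ^ (S p).
Definition t2 (p m : nat) : R := INR m / 2 ^ p.

Definition valid_index (p : Z) (m : nat) : Prop :=
  (p = (-1)%Z /\ m = O) \/ ((0 <= p)%Z /\ (m <= 2 ^ Z.to_nat p)%nat).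

Definition coef (f : R -> Mat) (p : Z) (m : nat) : Mat :=
  if Z.eqb p (-1) then f 0
  else if Z.ltb p 0 then mzero
  else match m with
       | O => if Z.eqb p 0 then msub (f 1) (f 0) else mzero
       | S _ =>
         let q := Z.to_nat p in
         fun i j => 2 * f (t1 q m) i j - f (t0 q m) i j - f (t2 q m) i j
       end.

(* Rescaled Schauder functions phi_{pm}(t) = int_0^t chi_{pm}, p >= 0, written
   out explicitly: phi_{00}(t) = t, phi_{p0} = 0 for p >= 1, and for m >= 1
   the hat function supported on [t0,t2] with slope 2^p on [t0,t1] and
   -2^p on [t1,t2] (for t in [0,1]). *)
Definition phi (p m : nat) (t : R) : R :=
  match m with
  | O => match p with O => t | S _ => 0 end
  | S _ =>
    if Rle_dec t (t0 p m) then 0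
    else if Rle_dec t (t1 p m) then 2 ^ p * (t - t0 p m)
    else if Rle_dec t (t2 p m) then 2 ^ p * (t2 p m - t)
    else 0
  end.

(* Delta_{-1} f = f_{-10} phi_{-10} = f(0) *)
Definition Delta_m1 (f : R -> Mat) (t : R) : Mat := coef f (-1)%Z O.

Definition Delta (p : nat) (f : R -> Mat) (t : R) : Mat :=
  msum (S (2 ^ p)) (fun m => mscal (phi p m t) (coef f (Z.of_nat p) m)).

(* S_{p-1} f = sum_{q=-1}^{p-1} Delta_q f, for p >= 0 *)
Definition S_below (p : nat) (f : R -> Mat) (t : R) : Mat :=
  madd (Delta_m1 f t) (msum p (fun q => Delta q f t)).

(* Limit of a real sequence (chosen by classical choice; the sequences below
   converge, so this is the usual limit). *)
Definition lim_seq (u : nat -> R) : R :=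
  epsilon (inhabits 0) (fun l => Un_cv u l).

Definition paraprod (k : nat) (v w : R -> Mat) (t : R) : Mat :=
  fun i j => lim_seq (fun N =>
    rsum (S N) (fun p => mmul k (S_below p v t) (Delta p w t) i j)).

Definition holder_bound (r c : nat) (alpha : R) (f : R -> Mat) (K : R) : Prop :=
  forall p m, valid_index p m ->
    Rpower 2 (IZR p * alpha) * mnorm r c (coef f p m) <= K.

(* Main.v *)
Require Import Defs.
From Stdlib Require Import Reals ZArith.
Open Scope R_scope.
From Stdlib Require Import Lra Lia Psatz FunctionalExtensionality ClassicalEpsilon.
Import Defs.

Lemma rsum_ext n f g : (forall i, (i < n)%nat -> f i = g i) -> rsum n f = rsum n g.
Proof. induction n; simpl; intros H; auto. rewrite IHn by (intros; apply H; lia). rewrite H by lia; auto. Qed.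
Lemma rsum_zero n : rsum n (fun _ => 0) = 0.
Proof. induction n; simpl. auto. rewrite IHn; lra. Qed.
Lemma rsum_plus n f g : rsum n (fun i => f i + g i) = rsum n f + rsum n g.
Proof. induction n; simpl; lra. Qed.
Lemma rsum_scal n c f : rsum n (fun i => c * f i) = c * rsum n f.
Proof. induction n; simpl; lra. Qed.
Lemma rsum_le n f g : (forall i, (i<n)%nat -> f i <= g i) -> rsum n f <= rsum n g.
Proof. induction n; simpl; intros H. lra. assert (f n <= g n) by (apply H; lia).
 assert (rsum n f <= rsum n g) by (apply IHn; intros; apply H; lia). lra. Qed.
Lemma rsum_abs n f : Rabs (rsum n f) <= rsum n (fun i => Rabs (f i)).
Proof. induction n; simpl. rewrite Rabs_R0; lra.
 eapply Rle_trans. apply Rabs_triang. lra. Qed.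
Lemma rsum_nonneg n f : (forall i, (i<n)%nat -> 0 <= f i) -> 0 <= rsum n f.
Proof. intros H. replace 0 with (rsum n (fun _ => 0)). apply rsum_le; auto.
 apply rsum_zero. Qed.
Lemma rsum_single n f k : (k < n)%nat -> (forall i, (i<n)%nat -> i<>k -> f i = 0) -> rsum n f = f k.
Proof. induction n; intros Hk H. lia. simpl. destruct (Nat.eq_dec k n).
 - subst. replace (rsum n f) with 0. lra. clear IHn. symmetry.
   replace 0 with (rsum n (fun _ => 0)). apply rsum_ext. intros; apply H; lia.
   apply rsum_zero.
 - rewrite IHn by (try lia; intros; apply H; lia). rewrite (H n) by lia. lra. Qed.
Lemma rsum_swap n k f : rsum n (fun i => rsum k (fun j => f i j)) = rsum k (fun j => rsum n (fun i => f i j)).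
Proof. induction n; simpl. induction k; simpl; lra. rewrite IHn. clear IHn.
 induction k; simpl; lra. Qed.

Lemma rmaxn_nonneg n f : 0 <= rmaxn n f.
Proof. induction n; simpl. lra. eapply Rle_trans; [exact IHn| apply Rmax_l]. Qed.
Lemma rmaxn_ge n f i : (i < n)%nat -> f i <= rmaxn n f.
Proof. induction n; intros H. lia. simpl. destruct (Nat.eq_dec i n).
 subst; apply Rmax_r. eapply Rle_trans; [apply IHn; lia| apply Rmax_l]. Qed.
Lemma rmaxn_le n f K : 0 <= K -> (forall i, (i<n)%nat -> f i <= K) -> rmaxn n f <= K.
Proof. induction n; simpl; intros HK H. auto. apply Rmax_lub. apply IHn; auto. apply H; lia. Qed.

Lemma mnorm_nonneg r c A : 0 <= mnorm r c A.
Proof. apply rmaxn_nonneg. Qed.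
Lemma mnorm_row r c A i : (i < r)%nat -> rsum c (fun j => Rabs (A i j)) <= mnorm r c A.
Proof. intros; unfold mnorm; apply (rmaxn_ge r (fun i => rsum c (fun j => Rabs (A i j)))); auto. Qed.
Lemma mnorm_le r c A K : 0 <= K -> (forall i, (i<r)%nat -> rsum c (fun j => Rabs (A i j)) <= K) -> mnorm r c A <= K.
Proof. intros; apply rmaxn_le; auto. Qed.

Lemma mnorm_add r c A B : mnorm r c (madd A B) <= mnorm r c A + mnorm r c B.
Proof. apply mnorm_le. pose proof (mnorm_nonneg r c A); pose proof (mnorm_nonneg r c B); lra.
 intros i Hi. eapply Rle_trans. apply (rsum_le _ _ (fun j => Rabs (A i j) + Rabs (B i j))).
 intros; unfold madd; apply Rabs_triang. rewrite rsum_plus.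
 pose proof (mnorm_row r c A i Hi); pose proof (mnorm_row r c B i Hi); lra. Qed.
Lemma mnorm_sub r c A B : mnorm r c (msub A B) <= mnorm r c A + mnorm r c B.
Proof. apply mnorm_le. pose proof (mnorm_nonneg r c A); pose proof (mnorm_nonneg r c B); lra.
 intros i Hi. eapply Rle_trans. apply (rsum_le _ _ (fun j => Rabs (A i j) + Rabs (B i j))).
 intros; unfold msub, Rminus; eapply Rle_trans; [apply Rabs_triang|rewrite Rabs_Ropp; lra]. rewrite rsum_plus.
 pose proof (mnorm_row r c A i Hi); pose proof (mnorm_row r c B i Hi); lra. Qed.
Lemma mnorm_scal r c a A : mnorm r c (mscal a A) <= Rabs a * mnorm r c A.
Proof. apply mnorm_le. pose proof (mnorm_nonneg r c A); pose proof (Rabs_pos a); nra.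
 intros i Hi. unfold mscal. eapply Rle_trans. apply (rsum_le _ _ (fun j => Rabs a * Rabs (A i j))).
 intros; rewrite Rabs_mult; lra. rewrite rsum_scal. pose proof (mnorm_row r c A i Hi).
 pose proof (Rabs_pos a); nra. Qed.
Lemma mnorm_mul r k c A B : mnorm r c (mmul k A B) <= mnorm r k A * mnorm k c B.
Proof. apply mnorm_le. pose proof (mnorm_nonneg r k A); pose proof (mnorm_nonneg k c B); nra.
 intros i Hi. unfold mmul.
 eapply Rle_trans. apply (rsum_le _ _ (fun j => rsum k (fun l => Rabs (A i l) * Rabs (B l j)))).
 intros. eapply Rle_trans. apply rsum_abs. right; apply rsum_ext; intros; apply Rabs_mult.
 rewrite rsum_swap.
 eapply Rle_trans. apply (rsum_le _ _ (fun l => Rabs (A i l) * mnorm k c B)).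
 intros l Hl. rewrite rsum_scal. apply Rmult_le_compat_l. apply Rabs_pos. apply mnorm_row; auto.
 rewrite (rsum_ext _ _ (fun l => mnorm k c B * Rabs (A i l))) by (intros; lra).
 rewrite rsum_scal. pose proof (mnorm_row r k A i Hi). pose proof (mnorm_nonneg k c B). nra. Qed.
Lemma mnorm_zero r c : mnorm r c mzero = 0.
Proof. apply Rle_antisym; [|apply mnorm_nonneg]. apply mnorm_le. lra. intros.
 unfold mzero. rewrite Rabs_R0. right. apply rsum_zero. Qed.
Lemma mnorm_msum r c N F : mnorm r c (msum N F) <= rsum N (fun q => mnorm r c (F q)).
Proof. induction N. simpl. unfold msum; simpl. fold mzero. rewrite mnorm_zero; lra.
 simpl. replace (msum (S N) F) with (madd (msum N F) (F N)).
 eapply Rle_trans. apply mnorm_add. lra. unfold msum, madd; simpl; auto. Qed.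

Definition sd3 (X0 X1 X2 : Mat) : Mat := fun i j => 2 * X1 i j - X0 i j - X2 i j.

Ltac mext := apply functional_extensionality; intro i; apply functional_extensionality; intro j.
Ltac munf := unfold sd3, madd, msub, mscal, mzero, mmul, msum.

Lemma prod_sd3 kk A0 A2 B0 B1 B2 :
  let A1 := mscal (/2) (madd A0 A2) in
  sd3 (mmul kk A0 B0) (mmul kk A1 B1) (mmul kk A2 B2) =
  msub (mmul kk A1 (sd3 B0 B1 B2)) (mscal (/2) (mmul kk (msub A2 A0) (msub B2 B0))).
Proof. intros A1; unfold A1. mext; munf. induction kk; simpl; lra. Qed.

Lemma prod_sd3_const kk A B0 B1 B2 :
  sd3 (mmul kk A B0) (mmul kk A B1) (mmul kk A B2) = mmul kk A (sd3 B0 B1 B2).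
Proof. mext; munf. induction kk; simpl; lra. Qed.

Lemma mmul_zero_r kk A : mmul kk A mzero = mzero.
Proof. mext; munf. induction kk; simpl; lra. Qed.
Lemma mmul_zero_l kk A : mmul kk mzero A = mzero.
Proof. mext; munf. induction kk; simpl; lra. Qed.

Lemma sd3_msum N F0 F1 F2 :
  sd3 (msum N F0) (msum N F1) (msum N F2) = msum N (fun q => sd3 (F0 q) (F1 q) (F2 q)).
Proof. mext; munf. induction N; simpl; lra. Qed.

Lemma msum_S N F : msum (S N) F = madd (msum N F) (F N).
Proof. reflexivity. Qed.

Lemma msum_ext N F G : (forall q, (q < N)%nat -> F q = G q) -> msum N F = msum N G.
Proof. intros H; mext; unfold msum. apply rsum_ext; intros; rewrite H; auto. Qed.

Lemma msum_zero N : msum N (fun _ => mzero) = mzero.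
Proof. mext; munf. apply rsum_zero. Qed.

Lemma mmul_assoc k1 k2 A B C : mmul k2 (mmul k1 A B) C = mmul k1 A (mmul k2 B C).
Proof. mext; munf.
 rewrite (rsum_ext k2 _ (fun l2 => rsum k1 (fun l1 => A i l1 * B l1 l2 * C l2 j))).
 rewrite rsum_swap. apply rsum_ext. intros l1 _.
 rewrite <- rsum_scal. apply rsum_ext; intros; ring.
 intros l2 _. rewrite Rmult_comm, <- rsum_scal. apply rsum_ext; intros; ring. Qed.

Lemma madd_zero_r A : madd A mzero = A.
Proof. mext; munf; ring. Qed.

Lemma pow2_pos p : 0 < 2 ^ p.
Proof. apply pow_lt; lra. Qed.
Lemma pow2_neq p : 2 ^ p <> 0.
Proof. apply pow_nonzero; lra. Qed.
Lemma pow2S p : 2 ^ (S p) = 2 * 2 ^ p.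
Proof. reflexivity. Qed.

Lemma t0S p k : t0 p (S k) = INR k / 2 ^ p.
Proof. unfold t0; rewrite S_INR; f_equal; ring. Qed.
Lemma t1S p k : t1 p (S k) = (2 * INR k + 1) / (2 * 2 ^ p).
Proof. unfold t1; rewrite S_INR, pow2S; f_equal; ring. Qed.
Lemma t2S p k : t2 p (S k) = (INR k + 1) / 2 ^ p.
Proof. unfold t2; rewrite S_INR; auto. Qed.

Ltac tsimp := rewrite ?t0S, ?t1S, ?t2S in *.

Lemma t_order p k : t0 p (S k) < t1 p (S k) /\ t1 p (S k) < t2 p (S k).
Proof. tsimp. pose proof (pow2_pos p). split; apply Rmult_lt_reg_r with (2 * 2^p); try lra;
 field_simplify; lra. Qed.
Lemma t1_mid p k : t1 p (S k) = (t0 p (S k) + t2 p (S k)) / 2.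
Proof. tsimp. pose proof (pow2_pos p). field. lra. Qed.
Lemma t_len p k : t2 p (S k) - t0 p (S k) = / 2 ^ p.
Proof. tsimp. pose proof (pow2_pos p). field. lra. Qed.

Lemma t_range p k : (k < 2 ^ p)%nat -> 0 <= t0 p (S k) /\ t2 p (S k) <= 1.
Proof. intros H. tsimp. pose proof (pow2_pos p). split.
 apply Rmult_le_pos. apply pos_INR. left; apply Rinv_0_lt_compat; lra.
 assert (INR (S k) <= INR (2^p)) by (apply le_INR; lia). rewrite S_INR, pow_INR in H1.
 simpl in H1. replace (1+1) with 2 in H1 by ring. apply Rmult_le_reg_r with (2^p); auto.
 replace ((INR k + 1) / 2 ^ p * 2 ^ p) with (INR k + 1) by (field; apply pow2_neq). lra. Qed.

Lemma t0_cl p K : t0 (S p) (S (2*K)) = t0 p (S K).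
Proof. tsimp. rewrite mult_INR, pow2S. simpl INR. pose proof (pow2_pos p). field. lra. Qed.
Lemma t2_cl p K : t2 (S p) (S (2*K)) = t1 p (S K).
Proof. tsimp. rewrite mult_INR, pow2S. simpl INR. pose proof (pow2_pos p). field. lra. Qed.
Lemma t0_cr p K : t0 (S p) (S (2*K+1)) = t1 p (S K).
Proof. tsimp. rewrite plus_INR, mult_INR, pow2S. simpl INR. pose proof (pow2_pos p). field. lra. Qed.
Lemma t2_cr p K : t2 (S p) (S (2*K+1)) = t2 p (S K).
Proof. tsimp. rewrite plus_INR, mult_INR, pow2S. simpl INR. pose proof (pow2_pos p). field. lra. Qed.

Lemma phi_out p k x : x <= t0 p (S k) \/ t2 p (S k) <= x -> phi p (S k) x = 0.
Proof. intros H. pose proof (t_order p k). unfold phi.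
 destruct (Rle_dec x (t0 p (S k))); auto.
 destruct (Rle_dec x (t1 p (S k))). lra.
 destruct (Rle_dec x (t2 p (S k))); auto. assert (x = t2 p (S k)) by lra. subst; ring. Qed.
Lemma phi_L p k x : t0 p (S k) <= x <= t1 p (S k) -> phi p (S k) x = 2 ^ p * (x - t0 p (S k)).
Proof. intros H. unfold phi.
 destruct (Rle_dec x (t0 p (S k))). assert (x = t0 p (S k)) by lra. subst; ring.
 destruct (Rle_dec x (t1 p (S k))); auto. lra. Qed.
Lemma phi_R p k x : t1 p (S k) <= x <= t2 p (S k) -> phi p (S k) x = 2 ^ p * (t2 p (S k) - x).
Proof. intros H. pose proof (t_order p k). unfold phi.
 destruct (Rle_dec x (t0 p (S k))). lra.
 destruct (Rle_dec x (t1 p (S k))). assert (x = t1 p (S k)) by lra. subst.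
 rewrite t1_mid. field.
 destruct (Rle_dec x (t2 p (S k))); auto. lra. Qed.

Lemma phi_grid q k j : phi q (S k) (INR j / 2 ^ q) = 0.
Proof. apply phi_out. tsimp. pose proof (pow2_pos q).
 destruct (le_lt_dec j k). left. apply Rmult_le_compat_r. left; apply Rinv_0_lt_compat; lra.
 apply le_INR; auto.
 right. apply Rmult_le_compat_r. left; apply Rinv_0_lt_compat; lra.
 replace (INR k + 1) with (INR (S k)) by (rewrite S_INR; auto). apply le_INR; lia. Qed.

Definition sd (f : R -> Mat) (p m : nat) : Mat := sd3 (f (t0 p m)) (f (t1 p m)) (f (t2 p m)).
Definition dl (f : R -> Mat) (p m : nat) : Mat := msub (f (t2 p m)) (f (t0 p m)).

Lemma coef_S f p k : coef f (Z.of_nat p) (S k) = sd f p (S k).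
Proof. unfold coef. replace (Z.of_nat p =? -1)%Z with false by (symmetry; apply Z.eqb_neq; lia).
 replace (Z.of_nat p <? 0)%Z with false by (symmetry; apply Z.ltb_ge; lia).
 rewrite Nat2Z.id. reflexivity. Qed.

Lemma Delta_local p k f x : (1 <= p)%nat -> (k < 2 ^ p)%nat ->
  t0 p (S k) <= x <= t2 p (S k) -> Delta p f x = mscal (phi p (S k) x) (sd f p (S k)).
Proof. intros Hp Hk Hx. unfold Delta. mext. unfold msum.
 rewrite (rsum_single _ _ (S k)). rewrite coef_S; auto. lia.
 intros m Hm Hne. destruct m. unfold mscal, phi. destruct p. lia. ring.
 unfold mscal. rewrite phi_out. ring.
 destruct (le_lt_dec m k).
 - right. assert (m < k)%nat by lia. tsimp. pose proof (pow2_pos p).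
   assert (INR m + 1 <= INR k). { replace (INR m + 1) with (INR (S m)) by (rewrite S_INR; auto). apply le_INR; lia. }
   apply Rle_trans with (INR k / 2^p); [|lra]. apply Rmult_le_compat_r. left; apply Rinv_0_lt_compat; lra.
   lra.
 - left. tsimp. pose proof (pow2_pos p). apply Rle_trans with ((INR k + 1) / 2^p); [lra|].
   apply Rmult_le_compat_r. left; apply Rinv_0_lt_compat; lra.
   replace (INR k + 1) with (INR (S k)) by (rewrite S_INR; auto). apply le_INR; lia. Qed.

Lemma Delta0 f x : Delta 0 f x = madd (mscal x (msub (f 1) (f 0))) (mscal (phi 0 1 x) (sd f 0 1)).
Proof. unfold Delta. mext. unfold msum. simpl. unfold coef. simpl. munf. unfold sd, sd3.
 simpl. ring. Qed.

Lemma Delta_grid q jj f : (1 <= q)%nat -> Delta q f (INR jj / 2 ^ q) = mzero.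
Proof. intros Hq. unfold Delta. mext. unfold msum, mzero. rewrite <- (rsum_zero (S (2^q))).
 apply rsum_ext. intros m _. destruct m. unfold mscal, phi. destruct q. lia. ring.
 unfold mscal. rewrite phi_grid. ring. Qed.

Lemma S_below_succ q f x : S_below (S q) f x = madd (S_below q f x) (Delta q f x).
Proof. unfold S_below. mext. munf. simpl. ring. Qed.
Lemma S_below_0 f x : S_below 0 f x = f 0.
Proof. unfold S_below, Delta_m1, coef. simpl. mext. munf. simpl. ring. Qed.

Definition lin (f : R -> Mat) p k x :=
  madd (f (t0 p (S k))) (mscal (2 ^ p * (x - t0 p (S k))) (msub (f (t2 p (S k))) (f (t0 p (S k))))).

Lemma t0_11 : t0 1 1 = 0. Proof. unfold t0; simpl; field. Qed.
Lemma t2_11 : t2 1 1 = /2. Proof. unfold t2; simpl; field. Qed.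
Lemma t0_12 : t0 1 2 = /2. Proof. unfold t0; simpl; field. Qed.
Lemma t2_12 : t2 1 2 = 1. Proof. unfold t2; simpl; field. Qed.
Lemma t0_01 : t0 0 1 = 0. Proof. unfold t0; simpl; field. Qed.
Lemma t1_01 : t1 0 1 = /2. Proof. unfold t1; simpl; field. Qed.
Lemma t2_01 : t2 0 1 = 1. Proof. unfold t2; simpl; field. Qed.

Lemma parent p k : (k < 2 ^ S p)%nat -> exists K, (K < 2 ^ p)%nat /\
  ((k = 2*K /\ t0 (S p) (S k) = t0 p (S K) /\ t2 (S p) (S k) = t1 p (S K)) \/
   (k = 2*K+1 /\ t0 (S p) (S k) = t1 p (S K) /\ t2 (S p) (S k) = t2 p (S K)))%nat.
Proof. intros H. destruct (Nat.Even_or_Odd k) as [[K HK]|[K HK]]; exists K; subst.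
 - split. simpl in H; lia. left. split; auto. split. apply t0_cl. apply t2_cl.
 - split. simpl in H; lia. right. split; auto. split. apply t0_cr. apply t2_cr. Qed.

Lemma interp r k f x : (1 <= r)%nat -> (k < 2 ^ r)%nat ->
  t0 r (S k) <= x <= t2 r (S k) -> S_below r f x = lin f r k x.
Proof. intros Hr. destruct r as [|r']. lia. clear Hr. revert k x.
 induction r' as [|r' IH]; intros k x Hk Hx.
 - rewrite S_below_succ, S_below_0, Delta0. unfold lin.
   destruct k as [|[|k]]; [| |simpl in Hk; lia].
   + rewrite t0_11, t2_11 in *. rewrite phi_L. rewrite t0_01.
     unfold sd. rewrite t0_01, t1_01, t2_01. mext. munf. simpl. field.
     rewrite t0_01, t1_01; lra.
   + replace (S 1) with 2%nat in * by auto. rewrite t0_12, t2_12 in *. rewrite phi_R. rewrite t2_01.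
     unfold sd. rewrite t0_01, t1_01, t2_01. mext. munf. simpl. field.
     rewrite t2_01, t1_01; lra.
 - destruct (parent (S r') k Hk) as [K [HK [[Hc [E0 E2]]|[Hc [E0 E2]]]]].
   + pose proof (t_order (S r') K).
     rewrite S_below_succ, (IH K x HK) by lra.
     rewrite (Delta_local (S r') K f x) by (try lia; lra).
     rewrite phi_L by lra. unfold lin. rewrite E0, E2. unfold sd.
     mext. munf. rewrite (pow2S (S r')). rewrite (t1_mid (S r') K). field.
   + pose proof (t_order (S r') K).
     rewrite S_below_succ, (IH K x HK) by lra.
     rewrite (Delta_local (S r') K f x) by (try lia; lra).
     rewrite phi_R by lra. unfold lin. rewrite E0, E2. unfold sd.
     mext. munf. rewrite (pow2S (S r')).
     set (P := 2 ^ S r') in *. assert (P <> 0) by apply pow2_neq.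
     assert (Ht: t2 (S r') (S K) = t0 (S r') (S K) + / P) by (pose proof (t_len (S r') K); unfold P; lra).
     rewrite (t1_mid (S r') K), Ht. field. auto. Qed.

Lemma interp_t0 r k f : (1 <= r)%nat -> (k < 2 ^ r)%nat -> S_below r f (t0 r (S k)) = f (t0 r (S k)).
Proof. intros. pose proof (t_order r k). rewrite (interp r k); auto; try lra. unfold lin. mext. munf. ring. Qed.
Lemma interp_t2 r k f : (1 <= r)%nat -> (k < 2 ^ r)%nat -> S_below r f (t2 r (S k)) = f (t2 r (S k)).
Proof. intros. pose proof (t_order r k). rewrite (interp r k); auto; try lra. unfold lin.
 pose proof (t_len r k). mext. munf.
 replace (2 ^ r * (t2 r (S k) - t0 r (S k))) with 1. ring. rewrite H2. field. apply pow2_neq. Qed.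

Lemma S_below_Sp_J p k f : (k < 2 ^ p)%nat ->
  S_below (S p) f (t0 p (S k)) = f (t0 p (S k)) /\
  S_below (S p) f (t1 p (S k)) = f (t1 p (S k)) /\
  S_below (S p) f (t2 p (S k)) = f (t2 p (S k)).
Proof. intros H. assert (H1: (2*k < 2 ^ S p)%nat) by (simpl; lia).
 assert (H2: (2*k+1 < 2 ^ S p)%nat) by (simpl; lia).
 split; [|split].
 - rewrite <- t0_cl. apply interp_t0; auto; lia.
 - rewrite <- t2_cl. apply interp_t2; auto; lia.
 - rewrite <- t2_cr. apply interp_t2; auto; lia. Qed.

Lemma anc0 n q k : (k < 2 ^ (q + n))%nat -> exists K, (K < 2 ^ q)%nat /\
  t0 q (S K) <= t0 (q + n) (S k) /\ t2 (q + n) (S k) <= t2 q (S K).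
Proof. revert k. induction n; intros k Hk.
 - rewrite Nat.add_0_r in *. exists k. split; auto. lra.
 - rewrite Nat.add_succ_r in *. destruct (parent _ _ Hk) as [K1 [HK1 [[_ [E0 E2]]|[_ [E0 E2]]]]];
   destruct (IHn K1 HK1) as [K [HK [A1 A2]]]; exists K; split; auto;
   pose proof (t_order (q+n) K1); rewrite E0, E2; lra. Qed.

Lemma anc q p k : (q <= p)%nat -> (k < 2 ^ p)%nat -> exists K, (K < 2 ^ q)%nat /\
  t0 q (S K) <= t0 p (S k) /\ t2 p (S k) <= t2 q (S K).
Proof. intros Hq Hk. replace p with (q + (p - q))%nat in * by lia. apply anc0; auto. Qed.

Lemma anc_half q p k : (q < p)%nat -> (k < 2 ^ p)%nat -> exists K, (K < 2 ^ q)%nat /\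
  ((t0 q (S K) <= t0 p (S k) /\ t2 p (S k) <= t1 q (S K)) \/
   (t1 q (S K) <= t0 p (S k) /\ t2 p (S k) <= t2 q (S K))).
Proof. intros Hq Hk. destruct (anc (S q) p k) as [K1 [HK1 [A1 A2]]]; auto.
 destruct (parent _ _ HK1) as [K [HK [[_ [E0 E2]]|[_ [E0 E2]]]]]; exists K; split; auto.
 left; rewrite <- E0, <- E2; auto. right; rewrite <- E0, <- E2; auto. Qed.

Definition mid3 (X0 X1 X2 : Mat) := X1 = mscal (/2) (madd X0 X2).
Definition midJ (f : R -> Mat) p k := mid3 (f (t0 p (S k))) (f (t1 p (S k))) (f (t2 p (S k))).

Lemma sd3_mid X0 X1 X2 : mid3 X0 X1 X2 -> sd3 X0 X1 X2 = mzero.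
Proof. unfold mid3; intros ->. mext; munf; field. Qed.
Lemma mid3_sub A0 A1 A2 B0 B1 B2 : mid3 A0 A1 A2 -> mid3 B0 B1 B2 -> mid3 (msub A0 B0) (msub A1 B1) (msub A2 B2).
Proof. unfold mid3; intros -> ->. mext; munf; field. Qed.

Lemma lin_midJ f q K p k : midJ (lin f q K) p k.
Proof. unfold midJ, mid3, lin. rewrite (t1_mid p k). mext; munf; field. Qed.

Lemma midJ_S q p k a : (q <= p)%nat -> (k < 2 ^ p)%nat -> midJ (S_below q a) p k.
Proof. intros Hq Hk. destruct q.
 - unfold midJ, mid3. rewrite !S_below_0. mext; munf; field.
 - destruct (anc (S q) p k Hq Hk) as [K [HK [A1 A2]]].
   pose proof (t_order p k); pose proof (t_order (S q) K).
   unfold midJ. rewrite !(interp (S q) K a) by (try lia; lra). apply lin_midJ. Qed.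

Lemma Delta_sub q f x : Delta q f x = msub (S_below (S q) f x) (S_below q f x).
Proof. rewrite S_below_succ. mext; munf; ring. Qed.

Lemma sdJ_Delta_lt q p k b : (q < p)%nat -> (k < 2 ^ p)%nat ->
  sd (Delta q b) p (S k) = mzero.
Proof. intros. unfold sd. rewrite !(Delta_sub q b). apply sd3_mid. apply mid3_sub; apply midJ_S; auto; lia. Qed.

Lemma sdJ_Delta_eq p k b : (k < 2 ^ p)%nat -> sd (Delta p b) p (S k) = sd b p (S k).
Proof. intros Hk. unfold sd. rewrite !(Delta_sub p b).
 destruct (S_below_Sp_J p k b Hk) as [E0 [E1 E2]]. rewrite E0, E1, E2.
 pose proof (midJ_S p p k b (le_n p) Hk) as M. unfold midJ, mid3 in M. rewrite M.
 mext; munf; field. Qed.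

Lemma dlJ_S_zero p k a : dl (S_below 0 a) p (S k) = mzero.
Proof. unfold dl. rewrite !S_below_0. mext; munf; ring. Qed.

Lemma dlJ_Delta_eq p k b : (1 <= p)%nat -> (k < 2 ^ p)%nat -> dl (Delta p b) p (S k) = mzero.
Proof. intros Hp Hk. unfold dl. rewrite !(Delta_sub p b).
 destruct (S_below_Sp_J p k b Hk) as [E0 [E1 E2]]. rewrite E0, E2.
 rewrite interp_t0, interp_t2 by auto. mext; munf; ring. Qed.

Lemma grid_up jj p n : INR jj / 2 ^ p = INR (jj * 2 ^ n) / 2 ^ (p + n).
Proof. rewrite mult_INR, pow_INR, pow_add. simpl INR. replace (1+1) with 2 by ring.
 pose proof (pow2_neq p); pose proof (pow2_neq n). field. auto. Qed.

Lemma Delta_gridJ q p jj b : (S p <= q)%nat -> Delta q b (INR jj / 2 ^ S p) = mzero.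
Proof. intros H. replace q with (S p + (q - S p))%nat by lia.
 rewrite (grid_up jj (S p) (q - S p)). apply Delta_grid. lia. Qed.

Lemma tJ_grid p k : t0 p (S k) = INR (2*k) / 2 ^ S p /\ t1 p (S k) = INR (2*k+1) / 2 ^ S p
  /\ t2 p (S k) = INR (2*k+2) / 2 ^ S p.
Proof. tsimp. rewrite ?plus_INR, !mult_INR. simpl INR. rewrite pow2S. pose proof (pow2_neq p).
 repeat split; field; auto. Qed.

Lemma lim_const (u : nat -> R) c N : (forall K, (N <= K)%nat -> u K = c) -> lim_seq u = c.
Proof. intros H. assert (Hc : Un_cv u c).
 { intros eps Heps. exists N. intros K HK. rewrite H by lia. unfold R_dist. rewrite Rminus_diag, Rabs_R0; lra. }
 unfold lim_seq. pose proof (epsilon_spec (inhabits 0) (fun l => Un_cv u l) (ex_intro _ c Hc)) as Hs.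
 simpl in Hs. eapply UL_sequence; eauto. Qed.

Lemma rsum_tail N m F : (forall q, (N <= q)%nat -> F q = 0) -> rsum (N + m) F = rsum N F.
Proof. intros H. induction m. rewrite Nat.add_0_r; auto. rewrite Nat.add_succ_r. simpl. rewrite IHm, H by lia. ring. Qed.

Lemma pp_eval kk a b x N : (forall q, (N <= q)%nat -> Delta q b x = mzero) ->
  paraprod kk a b x = msum N (fun q => mmul kk (S_below q a x) (Delta q b x)).
Proof. intros H. unfold paraprod. mext. unfold msum.
 apply lim_const with N. intros K HK. replace (S K) with (N + (S K - N))%nat by lia.
 apply rsum_tail. intros q Hq. rewrite H by auto. rewrite mmul_zero_r. reflexivity. Qed.

Lemma pp_J kk a b p k :
  paraprod kk a b (t0 p (S k)) = msum (S p) (fun q => mmul kk (S_below q a (t0 p (S k))) (Delta q b (t0 p (S k)))) /\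
  paraprod kk a b (t1 p (S k)) = msum (S p) (fun q => mmul kk (S_below q a (t1 p (S k))) (Delta q b (t1 p (S k)))) /\
  paraprod kk a b (t2 p (S k)) = msum (S p) (fun q => mmul kk (S_below q a (t2 p (S k))) (Delta q b (t2 p (S k)))).
Proof. destruct (tJ_grid p k) as [E0 [E1 E2]].
 repeat split; apply pp_eval; intros q Hq; [rewrite E0|rewrite E1|rewrite E2]; apply Delta_gridJ; auto. Qed.

Lemma msum_sc N F : msum N (fun q => mscal (-1) (mscal (/2) (F q))) = mscal (-1) (mscal (/2) (msum N F)).
Proof. mext; munf. induction N; simpl; lra. Qed.

Lemma coef_pp kk a b p k : (k < 2 ^ p)%nat ->
  sd (paraprod kk a b) p (S k) =
  msub (mmul kk (S_below p a (t1 p (S k))) (sd b p (S k)))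
       (mscal (/2) (msum p (fun q => mmul kk (dl (S_below q a) p (S k)) (dl (Delta q b) p (S k))))).
Proof. intros Hk. unfold sd at 1. destruct (pp_J kk a b p k) as [E0 [E1 E2]]. rewrite E0, E1, E2.
 rewrite sd3_msum.
 rewrite (msum_ext _ _ (fun q => msub (mmul kk (S_below q a (t1 p (S k))) (sd (Delta q b) p (S k)))
     (mscal (/2) (mmul kk (dl (S_below q a) p (S k)) (dl (Delta q b) p (S k)))))).
 2:{ intros q Hq. pose proof (midJ_S q p k a ltac:(lia) Hk) as M. unfold midJ, mid3 in M.
     rewrite M. rewrite prod_sd3. reflexivity. }
 rewrite msum_S. rewrite sdJ_Delta_eq by auto.
 rewrite (msum_ext p _ (fun q => mscal (-1) (mscal (/2) (mmul kk (dl (S_below q a) p (S k)) (dl (Delta q b) p (S k)))))).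
 2:{ intros q Hq. rewrite sdJ_Delta_lt by auto. rewrite mmul_zero_r. mext; munf; ring. }
 assert (Z : mmul kk (dl (S_below p a) p (S k)) (dl (Delta p b) p (S k)) = mzero).
 { destruct p. rewrite dlJ_S_zero. apply mmul_zero_l. rewrite dlJ_Delta_eq by (auto; lia). apply mmul_zero_r. }
 rewrite Z, msum_sc. mext; munf. ring. Qed.

Lemma half_dl q p k : (1 <= q)%nat -> (q < p)%nat -> (k < 2 ^ p)%nat ->
  exists K c, (K < 2 ^ q)%nat /\ Rabs c = 2 ^ q / 2 ^ p /\
  (forall a, dl (S_below q a) p (S k) = mscal (2 ^ q / 2 ^ p) (dl a q (S K))) /\
  (forall b, dl (Delta q b) p (S k) = mscal c (sd b q (S K))).
Proof. intros Hq Hqp Hk. destruct (anc_half q p k Hqp Hk) as [K [HK Hh]].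
 pose proof (t_order p k); pose proof (t_order q K). pose proof (t_len p k).
 pose proof (pow2_pos p); pose proof (pow2_pos q).
 assert (Hin : t0 q (S K) <= t0 p (S k) /\ t2 p (S k) <= t2 q (S K)) by (destruct Hh; lra).
 assert (HS : forall a, dl (S_below q a) p (S k) = mscal (2 ^ q / 2 ^ p) (dl a q (S K))).
 { intros a. unfold dl. rewrite !(interp q K a) by (auto; lra). unfold lin. mext; munf.
   replace (2 ^ q / 2 ^ p) with (2^q * (t2 p (S k) - t0 p (S k))) by (rewrite H1; field; lra). ring. }
 destruct Hh as [Hh|Hh].
 - exists K, (2 ^ q / 2 ^ p). split; auto. split. rewrite Rabs_pos_eq; auto.
   apply Rmult_le_pos; [lra| left; apply Rinv_0_lt_compat; lra].
   split; auto. intros b. unfold dl. rewrite !(Delta_local q K b) by (auto; lra).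
   rewrite !phi_L by lra. mext; munf.
   replace (2 ^ q / 2 ^ p) with (2^q * (t2 p (S k) - t0 p (S k))) by (rewrite H1; field; lra). ring.
 - exists K, (- (2 ^ q / 2 ^ p)). split; auto. split. rewrite Rabs_Ropp, Rabs_pos_eq; auto.
   apply Rmult_le_pos; [lra| left; apply Rinv_0_lt_compat; lra].
   split; auto. intros b. unfold dl. rewrite !(Delta_local q K b) by (auto; lra).
   rewrite !phi_R by lra. mext; munf.
   replace (2 ^ q / 2 ^ p) with (2^q * (t2 p (S k) - t0 p (S k))) by (rewrite H1; field; lra). ring.
Qed.

Lemma sd_msub (F G : R -> Mat) p m : sd (fun t => msub (F t) (G t)) p m = msub (sd F p m) (sd G p m).
Proof. unfold sd. mext; munf. ring. Qed.

Lemma S_mid_val p k f : (1 <= p)%nat -> (k < 2 ^ p)%nat ->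
  S_below p f (t1 p (S k)) = mscal (/2) (madd (f (t0 p (S k))) (f (t2 p (S k)))).
Proof. intros. pose proof (midJ_S p p k f (le_n p) H0) as M. unfold midJ, mid3 in M.
 rewrite M, interp_t0, interp_t2; auto. Qed.

Lemma Rpow_nat a q : Rpower 2 (IZR (Z.of_nat q) * a) = (Rpower 2 a) ^ q.
Proof. rewrite <- INR_IZR_INZ, Rmult_comm, <- Rpower_mult, Rpower_pow; auto.
 apply exp_pos. Qed.

Lemma hb_sd r c a f K q k : holder_bound r c a f K -> (k < 2 ^ q)%nat ->
  (Rpower 2 a) ^ q * mnorm r c (sd f q (S k)) <= K.
Proof. intros H Hk. rewrite <- Rpow_nat, <- coef_S. apply H. right. split. lia.
 rewrite Nat2Z.id. lia. Qed.

Lemma hb_00 r c a f K : holder_bound r c a f K -> mnorm r c (msub (f 1) (f 0)) <= K.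
Proof. intros H. pose proof (H 0%Z 0%nat) as H0. unfold coef in H0. simpl in H0.
 replace (0 * a) with 0 in H0 by ring. rewrite Rpower_O in H0 by lra.
 rewrite Rmult_1_l in H0. apply H0. right. simpl. lia. Qed.

Lemma hb_nonneg r c a f K : holder_bound r c a f K -> 0 <= K.
Proof. intros H. pose proof (hb_00 r c a f K H). pose proof (mnorm_nonneg r c (msub (f 1) (f 0))). lra. Qed.

Lemma neigh r c a f K : 0 < a < 1 -> holder_bound r c a f K ->
  forall q k, (k < 2 ^ q)%nat ->
  (Rpower 2 a) ^ q * mnorm r c (dl f q (S k)) <= (Rpower 2 a / (2 - Rpower 2 a) + 1) * K.
Proof. intros Ha H. set (A := Rpower 2 a).
 assert (HA1 : 1 < A) by (unfold A; rewrite <- (Rpower_O 2) by lra; apply Rpower_lt; lra).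
 assert (HA2 : A < 2) by (unfold A; rewrite <- (Rpower_1 2) at 2 by lra; apply Rpower_lt; lra).
 pose proof (hb_nonneg _ _ _ _ _ H) as HK.
 assert (Hc : 0 <= A / (2 - A)) by (apply Rmult_le_pos; [lra|left; apply Rinv_0_lt_compat; lra]).
 induction q; intros k Hk.
 - simpl in Hk. assert (k = 0%nat) by lia. subst. simpl. unfold dl.
   rewrite t2_01, t0_01. pose proof (hb_00 _ _ _ _ _ H). nra.
 - destruct (parent q k Hk) as [K' [HK' [[_ [E0 E2]]|[_ [E0 E2]]]]].
   + assert (Eq : dl f (S q) (S k) = mscal (/2) (madd (dl f q (S K')) (sd f q (S K')))).
     { unfold dl, sd. rewrite E0, E2. mext; munf; field. }
     rewrite Eq. pose proof (IHq K' HK'). pose proof (hb_sd _ _ _ _ _ q K' H HK'). fold A in H1.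
     pose proof (mnorm_scal r c (/2) (madd (dl f q (S K')) (sd f q (S K')))).
     pose proof (mnorm_add r c (dl f q (S K')) (sd f q (S K'))).
     rewrite Rabs_pos_eq in H2 by lra.
     assert (HAq : 0 < A ^ q) by (apply pow_lt; lra). simpl.
     apply Rle_trans with (A / 2 * (A^q * mnorm r c (dl f q (S K')) + A^q * mnorm r c (sd f q (S K')))).
     { apply Rle_trans with ((A * A ^ q) * (/2 * (mnorm r c (dl f q (S K')) + mnorm r c (sd f q (S K'))))).
       apply Rmult_le_compat_l. nra. lra. right; field. }
     assert (Hcv : A * ((A / (2 - A) + 1) + 1) <= 2 * (A / (2 - A) + 1)).
     { apply Rmult_le_reg_r with (2 - A). lra. replace (A * (A / (2 - A) + 1 + 1) * (2 - A)) with (A * (4 - A)) by (field; lra).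
       replace (2 * (A / (2 - A) + 1) * (2 - A)) with 4 by (field; lra). nra. }
     apply Rle_trans with (A / 2 * ((A / (2 - A) + 1) * K + K)).
     apply Rmult_le_compat_l; [unfold Rdiv; apply Rmult_le_pos; [lra|apply Rlt_le, Rinv_0_lt_compat; lra] | lra].
     replace (A / 2 * ((A / (2 - A) + 1) * K + K)) with ((A * ((A / (2 - A) + 1) + 1)) * K / 2) by (field; lra).
     apply Rmult_le_reg_r with 2. lra. replace ((A * ((A / (2 - A) + 1) + 1)) * K / 2 * 2) with ((A * ((A / (2 - A) + 1) + 1)) * K) by (field; lra).
     nra.
   + assert (Eq : dl f (S q) (S k) = mscal (/2) (msub (dl f q (S K')) (sd f q (S K')))).
     { unfold dl, sd. rewrite E0, E2. mext; munf; field. }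
     rewrite Eq. pose proof (IHq K' HK'). pose proof (hb_sd _ _ _ _ _ q K' H HK'). fold A in H1.
     pose proof (mnorm_scal r c (/2) (msub (dl f q (S K')) (sd f q (S K')))).
     pose proof (mnorm_sub r c (dl f q (S K')) (sd f q (S K'))).
     rewrite Rabs_pos_eq in H2 by lra.
     assert (HAq : 0 < A ^ q) by (apply pow_lt; lra). simpl.
     apply Rle_trans with (A / 2 * (A^q * mnorm r c (dl f q (S K')) + A^q * mnorm r c (sd f q (S K')))).
     { apply Rle_trans with ((A * A ^ q) * (/2 * (mnorm r c (dl f q (S K')) + mnorm r c (sd f q (S K'))))).
       apply Rmult_le_compat_l. nra. lra. right; field. }
     assert (Hcv : A * ((A / (2 - A) + 1) + 1) <= 2 * (A / (2 - A) + 1)).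
     { apply Rmult_le_reg_r with (2 - A). lra. replace (A * (A / (2 - A) + 1 + 1) * (2 - A)) with (A * (4 - A)) by (field; lra).
       replace (2 * (A / (2 - A) + 1) * (2 - A)) with 4 by (field; lra). nra. }
     apply Rle_trans with (A / 2 * ((A / (2 - A) + 1) * K + K)).
     apply Rmult_le_compat_l; [unfold Rdiv; apply Rmult_le_pos; [lra|apply Rlt_le, Rinv_0_lt_compat; lra] | lra].
     replace (A / 2 * ((A / (2 - A) + 1) * K + K)) with ((A * ((A / (2 - A) + 1) + 1)) * K / 2) by (field; lra).
     apply Rmult_le_reg_r with 2. lra. replace ((A * ((A / (2 - A) + 1) + 1)) * K / 2 * 2) with ((A * ((A / (2 - A) + 1) + 1)) * K) by (field; lra).
     nra.
Qed.

Lemma geom_sum G p : 1 < G -> rsum p (fun q => G ^ q) <= G ^ p / (G - 1).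
Proof. intros HG. induction p; simpl.
 - apply Rmult_le_pos; [lra| left; apply Rinv_0_lt_compat; lra].
 - assert (G ^ p / (G - 1) + G ^ p = G * G ^ p / (G - 1)) by (field; lra). lra. Qed.

Lemma Gm_gt A B : 1 < A < 2 -> 1 < B < 2 -> 1 < 4 / (A * B).
Proof. intros. apply Rmult_lt_reg_r with (A * B). nra.
 unfold Rdiv; rewrite Rmult_assoc, Rinv_l by nra. nra. Qed.

Lemma sum_bound (A B X : R) p (F : nat -> Mat) r c : 1 < A < 2 -> 1 < B < 2 -> 0 <= X ->
  (forall q, (q < p)%nat -> mnorm r c (F q) <= X * (2 ^ q / 2 ^ p * (2 ^ q / 2 ^ p)) * / (A ^ q * B ^ q)) ->
  (A * B) ^ p * mnorm r c (msum p F) <= X / (4 / (A * B) - 1).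
Proof. intros HA HB HX H. set (Gm := 4 / (A * B)).
 assert (HG : 1 < Gm). { unfold Gm. apply Rmult_lt_reg_r with (A * B). nra.
   unfold Rdiv; rewrite Rmult_assoc, Rinv_l by nra. nra. }
 assert (Gpow : forall q, Gm ^ q = 2^q*2^q / (A^q*B^q)).
 { intros q. unfold Gm, Rdiv. rewrite Rpow_mult_distr, pow_inv, Rpow_mult_distr.
   replace 4 with (2 * 2) by ring. rewrite Rpow_mult_distr. reflexivity. }
 assert (Hterm : forall q, X * (2 ^ q / 2 ^ p * (2 ^ q / 2 ^ p)) * / (A ^ q * B ^ q) = X * / (2^p * 2^p) * Gm ^ q).
 { intros q. rewrite Gpow.
   pose proof (pow2_pos p). assert (0 < A ^ q) by (apply pow_lt; lra). assert (0 < B ^ q) by (apply pow_lt; lra).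
   field. repeat split; lra. }
 assert (HABp : 0 < (A * B) ^ p) by (apply pow_lt; nra).
 assert (Hm : mnorm r c (msum p F) <= X * / (2^p * 2^p) * (Gm ^ p / (Gm - 1))).
 { eapply Rle_trans. apply mnorm_msum. eapply Rle_trans. apply rsum_le. intros q Hq. rewrite <- Hterm. apply H; auto.
   rewrite rsum_scal. apply Rmult_le_compat_l. apply Rmult_le_pos; auto. left; apply Rinv_0_lt_compat.
   pose proof (pow2_pos p); nra. apply geom_sum; auto. }
 apply Rle_trans with ((A * B) ^ p * (X * / (2^p * 2^p) * (Gm ^ p / (Gm - 1)))).
 apply Rmult_le_compat_l; lra.
 right. rewrite Gpow, Rpow_mult_distr. pose proof (pow2_pos p).
 assert (0 < A ^ p) by (apply pow_lt; lra). assert (0 < B ^ p) by (apply pow_lt; lra).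
 assert (Gm - 1 <> 0) by lra. field. repeat split; lra. Qed.

Lemma mnorm_mul_sc r k c s s' X Y : mnorm r c (mmul k (mscal s X) (mscal s' Y)) <= Rabs s * Rabs s' * (mnorm r k X * mnorm k c Y).
Proof. eapply Rle_trans. apply mnorm_mul. pose proof (mnorm_scal r k s X). pose proof (mnorm_scal k c s' Y).
 pose proof (mnorm_nonneg r k (mscal s X)). pose proof (mnorm_nonneg k c (mscal s' Y)).
 pose proof (mnorm_nonneg r k X). pose proof (mnorm_nonneg k c Y). pose proof (Rabs_pos s). pose proof (Rabs_pos s').
 apply Rle_trans with ((Rabs s * mnorm r k X) * (Rabs s' * mnorm k c Y)). apply Rmult_le_compat; auto. right; ring. Qed.

Lemma mmul_scal2 k s s' X Y : mmul k (mscal s X) (mscal s' Y) = mscal (s * s') (mmul k X Y).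
Proof. mext; munf. induction k; simpl; lra. Qed.

Definition CE (al be : R) := / 2 * (Rpower 2 al / (2 - Rpower 2 al) + 1) / (4 / (Rpower 2 al * Rpower 2 be) - 1).

Lemma E_bound al be n d v w Kv Kw p k : 0 < al < 1 -> 0 < be < 1 ->
  holder_bound n d al v Kv -> holder_bound d 1 be w Kw -> (k < 2 ^ p)%nat ->
  (Rpower 2 al * Rpower 2 be) ^ p *
    mnorm n 1 (mscal (/2) (msum p (fun q => mmul d (dl (S_below q v) p (S k)) (dl (Delta q w) p (S k)))))
  <= CE al be * Kv * Kw.
Proof. intros Ha Hb Hv Hw Hk. set (A := Rpower 2 al). set (B := Rpower 2 be).
 assert (HA : 1 < A < 2) by (unfold A; split; [rewrite <- (Rpower_O 2) by lra|rewrite <- (Rpower_1 2) at 2 by lra]; apply Rpower_lt; lra).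
 assert (HB : 1 < B < 2) by (unfold B; split; [rewrite <- (Rpower_O 2) by lra|rewrite <- (Rpower_1 2) at 2 by lra]; apply Rpower_lt; lra).
 pose proof (hb_nonneg _ _ _ _ _ Hv). pose proof (hb_nonneg _ _ _ _ _ Hw).
 set (Cv := A / (2 - A) + 1).
 assert (HCv : 0 <= Cv) by (unfold Cv; assert (0 <= A / (2 - A)) by (apply Rmult_le_pos; [lra|left; apply Rinv_0_lt_compat; lra]); lra).
 assert (Hs : (A * B) ^ p * mnorm n 1 (msum p (fun q => mmul d (dl (S_below q v) p (S k)) (dl (Delta q w) p (S k))))
   <= (Cv * Kv * Kw) / (4 / (A * B) - 1)).
 { apply sum_bound; auto. apply Rmult_le_pos; [apply Rmult_le_pos|]; auto.
   intros q Hq. destruct q.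
   - rewrite dlJ_S_zero, mmul_zero_l, mnorm_zero. simpl.
     apply Rmult_le_pos. apply Rmult_le_pos. apply Rmult_le_pos; [apply Rmult_le_pos|]; auto.
     pose proof (pow2_pos p). apply Rmult_le_pos; left; apply Rmult_lt_0_compat; try lra; apply Rinv_0_lt_compat; lra.
     left; apply Rinv_0_lt_compat; lra.
   - destruct (half_dl (S q) p k ltac:(lia) Hq Hk) as [K [c [HK [Hc [HS HD]]]]].
     rewrite HS, HD. eapply Rle_trans. apply mnorm_mul_sc. rewrite Hc.
     pose proof (neigh n d al v Kv Ha Hv (S q) K HK) as N1. fold A in N1. fold Cv in N1.
     pose proof (hb_sd d 1 be w Kw (S q) K Hw HK) as N2. fold B in N2.
     assert (HAq : 0 < A ^ S q) by (apply pow_lt; lra). assert (HBq : 0 < B ^ S q) by (apply pow_lt; lra).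
     set (s := 2 ^ S q / 2 ^ p).
     assert (Hs0 : 0 <= s) by (unfold s; pose proof (pow2_pos p); pose proof (pow2_pos (S q)); apply Rmult_le_pos; [lra|left; apply Rinv_0_lt_compat; lra]).
     rewrite Rabs_pos_eq by auto.
     assert (M1 : mnorm n d (dl v (S q) (S K)) <= Cv * Kv * / A ^ S q).
     { apply Rmult_le_reg_l with (A ^ S q); auto. field_simplify; lra. }
     assert (M2 : mnorm d 1 (sd w (S q) (S K)) <= Kw * / B ^ S q).
     { apply Rmult_le_reg_l with (B ^ S q); auto. field_simplify; lra. }
     pose proof (mnorm_nonneg n d (dl v (S q) (S K))). pose proof (mnorm_nonneg d 1 (sd w (S q) (S K))).
     apply Rle_trans with (s * s * ((Cv * Kv * / A ^ S q) * (Kw * / B ^ S q))).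
     apply Rmult_le_compat_l. nra. apply Rmult_le_compat; auto.
     right. field. split; lra. }
 eapply Rle_trans. apply Rmult_le_compat_l. apply pow_le; nra. apply mnorm_scal.
 rewrite Rabs_pos_eq by lra.
 unfold CE. fold A B. fold Cv.
 replace (/ 2 * Cv / (4 / (A * B) - 1) * Kv * Kw) with (/2 * ((Cv * Kv * Kw) / (4 / (A * B) - 1))).
 2:{ pose proof (Gm_gt A B HA HB) as Hgt.
     assert (4 / (A * B) - 1 <> 0) by lra. assert (A * B < 4) by nra. field; repeat split; lra. }
 nra. Qed.

Lemma mmul_msub_r k A B C : mmul k A (msub B C) = msub (mmul k A B) (mmul k A C).
Proof. mext; munf. induction k; simpl; lra. Qed.
Lemma mmul_msub_l k A B C : mmul k (msub A B) C = msub (mmul k A C) (mmul k B C).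
Proof. mext; munf. induction k; simpl; lra. Qed.
Lemma msum_msub N F G : msum N (fun q => msub (F q) (G q)) = msub (msum N F) (msum N G).
Proof. mext; munf. induction N; simpl; lra. Qed.

Lemma avg_prod n U0 U2 V0 V2 : msub (mmul n (mscal (/ 2) (madd U0 U2)) (mscal (/ 2) (madd V0 V2)))
   (mscal (/ 2) (madd (mmul n U0 V0) (mmul n U2 V2))) = mscal (- / 4) (mmul n (msub U2 U0) (msub V2 V0)).
Proof. mext; munf. induction n; simpl; lra. Qed.

Lemma sup_pt m n u Ku x : sup_bound m n u Ku -> 0 <= x <= 1 -> mnorm m n (u x) <= Ku.
Proof. intros H Hx; apply H; auto. Qed.

Lemma Jpts p k : (k < 2 ^ p)%nat -> (0 <= t0 p (S k) <= 1) /\ (0 <= t1 p (S k) <= 1) /\ (0 <= t2 p (S k) <= 1).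
Proof. intros Hk. pose proof (t_range p k Hk). pose proof (t_order p k). repeat split; lra. Qed.

Lemma decomp n d (u v w : R -> Mat) p k : (k < 2 ^ p)%nat ->
  let Pi := paraprod d v w in
  let UV := fun s => mmul n (u s) (v s) in
  sd (fun t => msub (paraprod n u Pi t) (paraprod d UV w t)) p (S k) =
  msub (msub (mmul d (msub (mmul n (S_below p u (t1 p (S k))) (S_below p v (t1 p (S k))))
                           (S_below p UV (t1 p (S k)))) (sd w p (S k)))
             (mmul n (S_below p u (t1 p (S k)))
                (mscal (/2) (msum p (fun q => mmul d (dl (S_below q v) p (S k)) (dl (Delta q w) p (S k)))))))
       (mscal (/2) (msum p (fun q => msub (mmul n (dl (S_below q u) p (S k)) (dl (Delta q Pi) p (S k)))
                                          (mmul d (dl (S_below q UV) p (S k)) (dl (Delta q w) p (S k)))))).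
Proof. intros Hk Pi UV. rewrite sd_msub. rewrite !coef_pp by auto. unfold Pi. rewrite coef_pp by auto.
 rewrite msum_msub, !mmul_msub_r, !mmul_msub_l, <- mmul_assoc. mext. unfold msub, mscal. ring. Qed.

Lemma P1_bound al be n m d u v w Ku Kv Kw p k : 0 < al < 1 -> 0 < be < 1 ->
  sup_bound m n u Ku -> holder_bound n d al v Kv -> holder_bound d 1 be w Kw -> (k < 2 ^ p)%nat ->
  (Rpower 2 al * Rpower 2 be) ^ p *
  mnorm m 1 (mmul d (msub (mmul n (S_below p u (t1 p (S k))) (S_below p v (t1 p (S k))))
                           (S_below p (fun s => mmul n (u s) (v s)) (t1 p (S k)))) (sd w p (S k)))
  <= / 2 * (Rpower 2 al / (2 - Rpower 2 al) + 1) * Ku * Kv * Kw.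
Proof. intros Ha Hb Hu Hv Hw Hk. set (A := Rpower 2 al). set (B := Rpower 2 be).
 assert (HA : 1 < A < 2) by (unfold A; split; [rewrite <- (Rpower_O 2) by lra|rewrite <- (Rpower_1 2) at 2 by lra]; apply Rpower_lt; lra).
 assert (HB : 1 < B < 2) by (unfold B; split; [rewrite <- (Rpower_O 2) by lra|rewrite <- (Rpower_1 2) at 2 by lra]; apply Rpower_lt; lra).
 pose proof (hb_nonneg _ _ _ _ _ Hv). pose proof (hb_nonneg _ _ _ _ _ Hw).
 assert (HKu : 0 <= Ku) by (pose proof (mnorm_nonneg m n (u 0)); pose proof (Hu 0 ltac:(lra)); lra).
 set (Cv := A / (2 - A) + 1).
 assert (HCv : 0 <= Cv) by (unfold Cv; assert (0 <= A / (2 - A)) by (apply Rmult_le_pos; [lra|left; apply Rinv_0_lt_compat; lra]); lra).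
 destruct p.
 - rewrite !S_below_0. replace (msub (mmul n (u 0) (v 0)) (mmul n (u 0) (v 0))) with mzero by (mext; munf; ring).
   rewrite mmul_zero_l, mnorm_zero. rewrite Rmult_0_r.
   repeat apply Rmult_le_pos; auto; lra.
 - rewrite !S_mid_val by (auto; lia).
   replace (msub (mmul n (mscal (/ 2) (madd (u (t0 (S p) (S k))) (u (t2 (S p) (S k)))))
              (mscal (/ 2) (madd (v (t0 (S p) (S k))) (v (t2 (S p) (S k))))))
              (mscal (/ 2) (madd (mmul n (u (t0 (S p) (S k))) (v (t0 (S p) (S k)))) (mmul n (u (t2 (S p) (S k))) (v (t2 (S p) (S k)))))))
   with (mscal (- / 4) (mmul n (dl u (S p) (S k)) (dl v (S p) (S k)))).
   2:{ unfold dl. symmetry. apply avg_prod. }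
   destruct (Jpts (S p) k Hk) as [J0 [J1 J2]].
   assert (Hu2 : mnorm m n (dl u (S p) (S k)) <= 2 * Ku).
   { unfold dl. eapply Rle_trans. apply mnorm_sub. pose proof (Hu _ J0); pose proof (Hu _ J2); lra. }
   pose proof (neigh n d al v Kv Ha Hv (S p) k Hk) as N1. fold A in N1. fold Cv in N1.
   pose proof (hb_sd d 1 be w Kw (S p) k Hw Hk) as N2. fold B in N2.
   assert (HAq : 0 < A ^ S p) by (apply pow_lt; lra). assert (HBq : 0 < B ^ S p) by (apply pow_lt; lra).
   pose proof (mnorm_nonneg n d (dl v (S p) (S k))). pose proof (mnorm_nonneg d 1 (sd w (S p) (S k))).
   pose proof (mnorm_nonneg m n (dl u (S p) (S k))).
   assert (Hx : mnorm m 1 (mmul d (mscal (- / 4) (mmul n (dl u (S p) (S k)) (dl v (S p) (S k)))) (sd w (S p) (S k)))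
     <= / 4 * (mnorm m n (dl u (S p) (S k)) * mnorm n d (dl v (S p) (S k))) * mnorm d 1 (sd w (S p) (S k))).
   { eapply Rle_trans. apply mnorm_mul. apply Rmult_le_compat_r; auto.
     eapply Rle_trans. apply mnorm_scal. rewrite Rabs_Ropp, Rabs_pos_eq by lra.
     apply Rmult_le_compat_l. lra. apply mnorm_mul. }
   rewrite Rpow_mult_distr.
   apply Rle_trans with (/4 * mnorm m n (dl u (S p) (S k)) * (A ^ S p * mnorm n d (dl v (S p) (S k))) * (B ^ S p * mnorm d 1 (sd w (S p) (S k)))).
   { apply Rle_trans with (A ^ S p * B ^ S p * (/ 4 * (mnorm m n (dl u (S p) (S k)) * mnorm n d (dl v (S p) (S k))) * mnorm d 1 (sd w (S p) (S k)))).
     apply Rmult_le_compat_l. nra. auto. right; ring. }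
   apply Rle_trans with (/4 * (2 * Ku) * (Cv * Kv) * Kw).
   assert (0 <= /4) by (apply Rlt_le, Rinv_0_lt_compat; lra).
   apply Rmult_le_compat.
   + apply Rmult_le_pos; [apply Rmult_le_pos|]; auto. apply Rmult_le_pos; lra.
   + apply Rmult_le_pos; lra.
   + apply Rmult_le_compat. apply Rmult_le_pos; auto. apply Rmult_le_pos; lra.
     apply Rmult_le_compat_l; auto. auto.
   + auto.
   + right; field.
Qed.

Lemma U1_bound m n u Ku p k : sup_bound m n u Ku -> (k < 2 ^ p)%nat ->
  mnorm m n (S_below p u (t1 p (S k))) <= Ku.
Proof. intros Hu Hk. destruct p.
 - rewrite S_below_0. apply Hu. lra.
 - rewrite S_mid_val by (auto; lia). destruct (Jpts (S p) k Hk) as [J0 [J1 J2]].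
   eapply Rle_trans. apply mnorm_scal. rewrite Rabs_pos_eq by lra.
   pose proof (mnorm_add m n (u (t0 (S p) (S k))) (u (t2 (S p) (S k)))).
   pose proof (Hu _ J0); pose proof (Hu _ J2). lra. Qed.

Lemma P2_bound al be n m d u v w Ku Kv Kw p k : 0 < al < 1 -> 0 < be < 1 ->
  sup_bound m n u Ku -> holder_bound n d al v Kv -> holder_bound d 1 be w Kw -> (k < 2 ^ p)%nat ->
  (Rpower 2 al * Rpower 2 be) ^ p *
  mnorm m 1 (mmul n (S_below p u (t1 p (S k)))
                (mscal (/2) (msum p (fun q => mmul d (dl (S_below q v) p (S k)) (dl (Delta q w) p (S k))))))
  <= Ku * (CE al be * Kv * Kw).
Proof. intros Ha Hb Hu Hv Hw Hk.
 assert (HA : 1 < Rpower 2 al) by (rewrite <- (Rpower_O 2) by lra; apply Rpower_lt; lra).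
 assert (HB : 1 < Rpower 2 be) by (rewrite <- (Rpower_O 2) by lra; apply Rpower_lt; lra).
 assert (HAB : 0 <= (Rpower 2 al * Rpower 2 be) ^ p) by (apply pow_le; nra).
 eapply Rle_trans. apply Rmult_le_compat_l. auto. apply mnorm_mul.
 pose proof (U1_bound m n u Ku p k Hu Hk). pose proof (E_bound al be n d v w Kv Kw p k Ha Hb Hv Hw Hk).
 pose proof (mnorm_nonneg m n (S_below p u (t1 p (S k)))).
 set (X := mnorm n 1 _) in *. assert (0 <= X) by apply mnorm_nonneg.
 assert (0 <= (Rpower 2 al * Rpower 2 be) ^ p * X) by (apply Rmult_le_pos; auto).
 replace ((Rpower 2 al * Rpower 2 be) ^ p * (mnorm m n (S_below p u (t1 p (S k))) * X)) with
   (mnorm m n (S_below p u (t1 p (S k))) * ((Rpower 2 al * Rpower 2 be) ^ p * X)) by ring.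
 apply Rmult_le_compat; auto. Qed.

Lemma brk n d U0 U2 V0 V2 W E :
  msub (mmul n (msub U2 U0) (msub (mmul d (mscal (/2) (madd V0 V2)) W) E))
       (mmul d (msub (mmul n U2 V2) (mmul n U0 V0)) W)
  = msub (mmul d (mscal (- / 2) (mmul n (madd U2 U0) (msub V2 V0))) W) (mmul n (msub U2 U0) E).
Proof. rewrite mmul_msub_r, <- mmul_assoc.
 transitivity (msub (mmul d (msub (mmul n (msub U2 U0) (mscal (/ 2) (madd V0 V2))) (msub (mmul n U2 V2) (mmul n U0 V0))) W)
   (mmul n (msub U2 U0) E)).
 - rewrite (mmul_msub_l d (mmul n (msub U2 U0) (mscal (/ 2) (madd V0 V2)))). mext; unfold msub; ring.
 - f_equal. f_equal. mext; munf. induction n; simpl; lra. Qed.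

Lemma msub_scal x P Q : msub (mscal x P) (mscal x Q) = mscal x (msub P Q).
Proof. mext; munf; ring. Qed.

Lemma T_bound al be n m d u v w Ku Kv Kw p k q : 0 < al < 1 -> 0 < be < 1 ->
  sup_bound m n u Ku -> holder_bound n d al v Kv -> holder_bound d 1 be w Kw -> (k < 2 ^ p)%nat ->
  (q < p)%nat ->
  mnorm m 1 (msub (mmul n (dl (S_below q u) p (S k)) (dl (Delta q (paraprod d v w)) p (S k)))
                  (mmul d (dl (S_below q (fun s => mmul n (u s) (v s))) p (S k)) (dl (Delta q w) p (S k))))
  <= (Ku * Kv * Kw * ((Rpower 2 al / (2 - Rpower 2 al) + 1) + 2 * CE al be)) * (2 ^ q / 2 ^ p * (2 ^ q / 2 ^ p))
       * / (Rpower 2 al ^ q * Rpower 2 be ^ q).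
Proof. intros Ha Hb Hu Hv Hw Hk Hq. set (A := Rpower 2 al). set (B := Rpower 2 be).
 assert (HA : 1 < A < 2) by (unfold A; split; [rewrite <- (Rpower_O 2) by lra|rewrite <- (Rpower_1 2) at 2 by lra]; apply Rpower_lt; lra).
 assert (HB : 1 < B < 2) by (unfold B; split; [rewrite <- (Rpower_O 2) by lra|rewrite <- (Rpower_1 2) at 2 by lra]; apply Rpower_lt; lra).
 pose proof (hb_nonneg _ _ _ _ _ Hv). pose proof (hb_nonneg _ _ _ _ _ Hw).
 assert (HKu : 0 <= Ku) by (pose proof (mnorm_nonneg m n (u 0)); pose proof (Hu 0 ltac:(lra)); lra).
 set (Cv := A / (2 - A) + 1).
 assert (HCv : 0 <= Cv) by (unfold Cv; assert (0 <= A / (2 - A)) by (apply Rmult_le_pos; [lra|left; apply Rinv_0_lt_compat; lra]); lra).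
 assert (HCE : 0 <= CE al be).
 { unfold CE. fold A B. fold Cv. pose proof (Gm_gt A B HA HB). apply Rmult_le_pos. apply Rmult_le_pos; [lra|auto].
   left; apply Rinv_0_lt_compat; lra. }
 assert (HAq : 0 < A ^ q) by (apply pow_lt; lra). assert (HBq : 0 < B ^ q) by (apply pow_lt; lra).
 assert (Hs0 : 0 <= 2 ^ q / 2 ^ p) by (pose proof (pow2_pos p); pose proof (pow2_pos q); apply Rmult_le_pos; [lra|left; apply Rinv_0_lt_compat; lra]).
 destruct q.
 - rewrite !dlJ_S_zero, !mmul_zero_l. replace (msub mzero mzero) with mzero by (mext; munf; ring).
   rewrite mnorm_zero. apply Rmult_le_pos. apply Rmult_le_pos. repeat apply Rmult_le_pos; try lra. nra.
   left; apply Rinv_0_lt_compat; nra.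
 - destruct (half_dl (S q) p k ltac:(lia) Hq Hk) as [K [c [HK [Hc [HS HD]]]]].
   rewrite !HS, !HD, !mmul_scal2, msub_scal.
   eapply Rle_trans. apply mnorm_scal. rewrite Rabs_mult, Hc, Rabs_pos_eq by auto.
   set (s := 2 ^ S q / 2 ^ p) in *.
   unfold sd at 1. fold (sd (paraprod d v w) (S q) (S K)).
   rewrite coef_pp by auto. rewrite S_mid_val by (auto; lia).
   unfold dl at 2. unfold dl at 1.
   rewrite brk.
   destruct (Jpts (S q) K HK) as [J0 [J1 J2]].
   pose proof (Hu _ J0); pose proof (Hu _ J2).
   pose proof (neigh n d al v Kv Ha Hv (S q) K HK) as N1. fold A in N1. fold Cv in N1.
   pose proof (hb_sd d 1 be w Kw (S q) K Hw HK) as N2. fold B in N2.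
   pose proof (E_bound al be n d v w Kv Kw (S q) K Ha Hb Hv Hw HK) as N3. fold A B in N3.
   rewrite Rpow_mult_distr in N3.
   set (E := mscal (/ 2) (msum (S q) _)) in *.
   set (U0 := u (t0 (S q) (S K))) in *. set (U2 := u (t2 (S q) (S K))) in *.
   fold (dl v (S q) (S K)).
   set (W := sd w (S q) (S K)) in *. set (DV := dl v (S q) (S K)) in *.
   assert (B1 : mnorm m 1 (mmul d (mscal (- / 2) (mmul n (madd U2 U0) DV)) W) <= Ku * (Cv * Kv * / A ^ S q) * (Kw * / B ^ S q)).
   { eapply Rle_trans. apply mnorm_mul.
     assert (M1 : mnorm n d DV <= Cv * Kv * / A ^ S q).
     { apply Rmult_le_reg_l with (A ^ S q); auto. field_simplify; lra. }
     assert (M2 : mnorm d 1 W <= Kw * / B ^ S q).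
     { apply Rmult_le_reg_l with (B ^ S q); auto. field_simplify; lra. }
     assert (M0 : mnorm m d (mscal (- / 2) (mmul n (madd U2 U0) DV)) <= Ku * (Cv * Kv * / A ^ S q)).
     { eapply Rle_trans. apply mnorm_scal. rewrite Rabs_Ropp, Rabs_pos_eq by lra.
       eapply Rle_trans. apply Rmult_le_compat_l. lra. apply mnorm_mul.
       pose proof (mnorm_add m n U2 U0). pose proof (mnorm_nonneg n d DV). pose proof (mnorm_nonneg m n (madd U2 U0)).
       apply Rle_trans with (/2 * (2 * Ku) * (Cv * Kv * / A ^ S q)).
       replace (/ 2 * (mnorm m n (madd U2 U0) * mnorm n d DV)) with (/2 * mnorm m n (madd U2 U0) * mnorm n d DV) by ring.
       assert (Hh : 0 <= /2) by (apply Rlt_le, Rinv_0_lt_compat; lra).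
       apply Rmult_le_compat. apply Rmult_le_pos; auto. auto.
       apply Rmult_le_compat_l; lra. auto. right; field; lra. }
     apply Rmult_le_compat; auto. apply mnorm_nonneg. apply mnorm_nonneg. }
   assert (B2 : mnorm m 1 (mmul n (msub U2 U0) E) <= 2 * Ku * (CE al be * Kv * Kw * / (A ^ S q * B ^ S q))).
   { eapply Rle_trans. apply mnorm_mul.
     assert (M1 : mnorm n 1 E <= CE al be * Kv * Kw * / (A ^ S q * B ^ S q)).
     { apply Rmult_le_reg_l with (A ^ S q * B ^ S q). nra. field_simplify; try lra. }
     pose proof (mnorm_sub m n U2 U0).
     apply Rmult_le_compat; auto. apply mnorm_nonneg. apply mnorm_nonneg. lra. }
   eapply Rle_trans. apply Rmult_le_compat_l. apply Rmult_le_pos; auto. apply mnorm_sub.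
   apply Rle_trans with (s * s * (Ku * (Cv * Kv * / A ^ S q) * (Kw * / B ^ S q) + 2 * Ku * (CE al be * Kv * Kw * / (A ^ S q * B ^ S q)))).
   apply Rmult_le_compat_l. apply Rmult_le_pos; auto. lra.
   right. field. split; lra.
Qed.

Definition Cfin (al be : R) :=
  let A := Rpower 2 al in let B := Rpower 2 be in let Cv := A / (2 - A) + 1 in
  / 2 * Cv + CE al be + / 2 * ((Cv + 2 * CE al be) / (4 / (A * B) - 1)).

Lemma Cfin_nonneg al be : 0 < al < 1 -> 0 < be < 1 -> 0 <= Cfin al be.
Proof. intros Ha Hb. unfold Cfin, CE. set (A := Rpower 2 al). set (B := Rpower 2 be).
 assert (HA : 1 < A < 2) by (unfold A; split; [rewrite <- (Rpower_O 2) by lra|rewrite <- (Rpower_1 2) at 2 by lra]; apply Rpower_lt; lra).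
 assert (HB : 1 < B < 2) by (unfold B; split; [rewrite <- (Rpower_O 2) by lra|rewrite <- (Rpower_1 2) at 2 by lra]; apply Rpower_lt; lra).
 pose proof (Gm_gt A B HA HB). set (G := 4 / (A * B)) in *.
 assert (0 <= A / (2 - A)) by (apply Rmult_le_pos; [lra|left; apply Rinv_0_lt_compat; lra]).
 set (Cv := A / (2 - A) + 1) in *.
 assert (0 <= / (G - 1)) by (left; apply Rinv_0_lt_compat; lra).
 assert (0 <= Cv) by (unfold Cv; lra).
 assert (Hh : 0 <= / 2) by (apply Rlt_le, Rinv_0_lt_compat; lra).
 assert (0 <= / 2 * Cv / (G - 1)) by (unfold Rdiv; apply Rmult_le_pos; auto; apply Rmult_le_pos; auto; lra).
 set (Y := / 2 * Cv / (G - 1)) in *.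
 assert (0 <= (Cv + 2 * Y) / (G - 1)) by (unfold Rdiv; apply Rmult_le_pos; auto; lra).
 assert (0 <= / 2 * Cv) by (apply Rmult_le_pos; auto; lra).
 assert (0 <= / 2 * ((Cv + 2 * Y) / (G - 1))) by (apply Rmult_le_pos; auto).
 lra. Qed.

Lemma J_bound al be n m d u v w Ku Kv Kw p k : 0 < al < 1 -> 0 < be < 1 ->
  sup_bound m n u Ku -> holder_bound n d al v Kv -> holder_bound d 1 be w Kw -> (k < 2 ^ p)%nat ->
  (Rpower 2 al * Rpower 2 be) ^ p *
  mnorm m 1 (sd (fun t => msub (paraprod n u (paraprod d v w) t)
                               (paraprod d (fun s => mmul n (u s) (v s)) w t)) p (S k))
  <= Cfin al be * Ku * Kv * Kw.
Proof. intros Ha Hb Hu Hv Hw Hk. rewrite decomp by auto.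
 set (A := Rpower 2 al). set (B := Rpower 2 be).
 assert (HA : 1 < A < 2) by (unfold A; split; [rewrite <- (Rpower_O 2) by lra|rewrite <- (Rpower_1 2) at 2 by lra]; apply Rpower_lt; lra).
 assert (HB : 1 < B < 2) by (unfold B; split; [rewrite <- (Rpower_O 2) by lra|rewrite <- (Rpower_1 2) at 2 by lra]; apply Rpower_lt; lra).
 pose proof (hb_nonneg _ _ _ _ _ Hv). pose proof (hb_nonneg _ _ _ _ _ Hw).
 assert (HKu : 0 <= Ku) by (pose proof (mnorm_nonneg m n (u 0)); pose proof (Hu 0 ltac:(lra)); lra).
 assert (HCE : 0 <= CE al be).
 { unfold CE. fold A B. pose proof (Gm_gt A B HA HB).
   assert (0 <= A / (2 - A)) by (apply Rmult_le_pos; [lra|left; apply Rinv_0_lt_compat; lra]).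
   apply Rmult_le_pos. apply Rmult_le_pos; lra. left; apply Rinv_0_lt_compat; lra. }
 assert (HCv : 0 <= A / (2 - A) + 1) by (assert (0 <= A / (2 - A)) by (apply Rmult_le_pos; [lra|left; apply Rinv_0_lt_compat; lra]); lra).
 pose proof (P1_bound al be n m d u v w Ku Kv Kw p k Ha Hb Hu Hv Hw Hk) as Q1. fold A B in Q1.
 pose proof (P2_bound al be n m d u v w Ku Kv Kw p k Ha Hb Hu Hv Hw Hk) as Q2. fold A B in Q2.
 set (X := Ku * Kv * Kw * ((A / (2 - A) + 1) + 2 * CE al be)).
 assert (HX : 0 <= X) by (unfold X; repeat apply Rmult_le_pos; lra).
 pose proof (sum_bound A B X p (fun q => msub (mmul n (dl (S_below q u) p (S k)) (dl (Delta q (paraprod d v w)) p (S k)))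
                  (mmul d (dl (S_below q (fun s => mmul n (u s) (v s))) p (S k)) (dl (Delta q w) p (S k)))) m 1 HA HB HX) as Q3.
 assert (Q3' := Q3 (fun q Hq => T_bound al be n m d u v w Ku Kv Kw p k q Ha Hb Hu Hv Hw Hk Hq)). clear Q3.
 set (P3 := msum p (fun q => msub (mmul n (dl (S_below q u) p (S k)) (dl (Delta q (paraprod d v w)) p (S k)))
                  (mmul d (dl (S_below q (fun s => mmul n (u s) (v s))) p (S k)) (dl (Delta q w) p (S k))))) in *.
 set (P1 := mmul d _ (sd w p (S k))) in *.
 set (P2 := mmul n _ (mscal (/2) _)) in *.
 assert (HAB : 0 <= (A * B) ^ p) by (apply pow_le; nra).
 assert (Hn : mnorm m 1 (msub (msub P1 P2) (mscal (/ 2) P3)) <= mnorm m 1 P1 + mnorm m 1 P2 + / 2 * mnorm m 1 P3).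
 { eapply Rle_trans. apply mnorm_sub. pose proof (mnorm_sub m 1 P1 P2). pose proof (mnorm_scal m 1 (/2) P3).
   rewrite Rabs_pos_eq in H2 by (apply Rlt_le, Rinv_0_lt_compat; lra). lra. }
 apply Rle_trans with ((A * B) ^ p * mnorm m 1 P1 + (A * B) ^ p * mnorm m 1 P2 + / 2 * ((A * B) ^ p * mnorm m 1 P3)).
 { apply Rle_trans with ((A * B) ^ p * (mnorm m 1 P1 + mnorm m 1 P2 + / 2 * mnorm m 1 P3)).
   apply Rmult_le_compat_l; auto. right; ring. }
 unfold Cfin. fold A B. unfold X in Q3'.
 assert (Hg : 1 < 4 / (A * B)) by (apply Gm_gt; auto).
 replace ((/ 2 * (A / (2 - A) + 1) + CE al be + / 2 * ((A / (2 - A) + 1 + 2 * CE al be) / (4 / (A * B) - 1))) * Ku * Kv * Kw)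
   with (/ 2 * (A / (2 - A) + 1) * Ku * Kv * Kw + Ku * (CE al be * Kv * Kw)
         + / 2 * (Ku * Kv * Kw * (A / (2 - A) + 1 + 2 * CE al be) / (4 / (A * B) - 1))).
 2:{ assert (A * B < 4) by nra. field. repeat split; lra. }
 lra. Qed.

Lemma Delta_at0 q b : Delta q b 0 = mzero.
Proof. destruct q.
 - rewrite Delta0. replace (phi 0 1 0) with 0. mext; munf; ring.
   pose proof (phi_grid 0 0 0) as P. simpl in P. replace (0 / 1) with 0 in P by field. auto.
 - replace 0 with (INR 0 / 2 ^ S q) by (simpl; field; apply pow2_neq). apply Delta_grid; lia. Qed.

Lemma Delta_at1 q b : (1 <= q)%nat -> Delta q b 1 = mzero.
Proof. intros. replace 1 with (INR (2 ^ q) / 2 ^ q). apply Delta_grid; auto.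
 rewrite pow_INR. simpl INR. replace (1+1) with 2 by ring. field. apply pow2_neq. Qed.

Lemma pp_at0 kk a b : paraprod kk a b 0 = mzero.
Proof. rewrite (pp_eval kk a b 0 0). mext; munf; simpl; auto. intros; apply Delta_at0. Qed.

Lemma pp_at1 kk a b : paraprod kk a b 1 = mmul kk (a 0) (msub (b 1) (b 0)).
Proof. rewrite (pp_eval kk a b 1 1). 2:{ intros; apply Delta_at1; auto. }
 rewrite msum_S. unfold msum at 1. simpl. rewrite S_below_0, Delta0.
 replace (phi 0 1 1) with 0.
 2:{ pose proof (phi_grid 0 0 1) as P. simpl in P. replace (1 / 1) with 1 in P by field. auto. }
 mext; munf. simpl. induction kk; simpl; lra. Qed.

Theorem mainTheorem10 :
  forall alpha beta : R, 0 < alpha < 1 -> 0 < beta < 1 ->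
  exists C : R, 0 < C /\
  forall (n m d : nat) (u v w : R -> Mat) (Ku Kv Kw : R),
    cont01 m n u -> cont01 n d v -> cont01 d 1 w ->
    sup_bound m n u Ku ->
    holder_bound n d alpha v Kv ->
    holder_bound d 1 beta w Kw ->
    holder_bound m 1 (alpha + beta)
      (fun t => msub (paraprod n u (paraprod d v w) t)
                     (paraprod d (fun s => mmul n (u s) (v s)) w t))
      (C * Ku * Kv * Kw).
Proof.
 intros al be Ha Hb. exists (Cfin al be + 1). split. pose proof (Cfin_nonneg al be Ha Hb); lra.
 intros n m d u v w Ku Kv Kw _ _ _ Hu Hv Hw.
 pose proof (hb_nonneg _ _ _ _ _ Hv). pose proof (hb_nonneg _ _ _ _ _ Hw).
 assert (HKu : 0 <= Ku) by (pose proof (mnorm_nonneg m n (u 0)); pose proof (Hu 0 ltac:(lra)); lra).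
 pose proof (Cfin_nonneg al be Ha Hb).
 assert (HC : 0 <= (Cfin al be + 1) * Ku * Kv * Kw) by (repeat apply Rmult_le_pos; lra).
 set (g := fun t => msub (paraprod n u (paraprod d v w) t) (paraprod d (fun s => mmul n (u s) (v s)) w t)).
 assert (Zr : forall M, M = mzero -> forall x, x * mnorm m 1 M <= (Cfin al be + 1) * Ku * Kv * Kw).
 { intros M -> x. rewrite mnorm_zero, Rmult_0_r. auto. }
 intros p mm Hvi. destruct Hvi as [[-> ->]|[Hp Hm]].
 - apply Zr. unfold coef. simpl. unfold g. rewrite !pp_at0. mext; munf; ring.
 - destruct (Z_of_nat_complete p Hp) as [p' ->]. rewrite Nat2Z.id in Hm.
   destruct mm as [|k].
   + apply Zr. destruct p'.
     * unfold coef. simpl. unfold g. rewrite !pp_at0, !pp_at1. rewrite pp_at0.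
       rewrite mmul_assoc. replace (msub (mmul d (v 0) (msub (w 1) (w 0))) mzero) with (mmul d (v 0) (msub (w 1) (w 0))) by (mext; munf; ring).
       mext; munf. ring.
     * unfold coef. replace (Z.of_nat (S p') =? -1)%Z with false by (symmetry; apply Z.eqb_neq; lia).
       replace (Z.of_nat (S p') <? 0)%Z with false by (symmetry; apply Z.ltb_ge; lia).
       replace (Z.of_nat (S p') =? 0)%Z with false by (symmetry; apply Z.eqb_neq; lia). auto.
   + rewrite coef_S, Rpow_nat, Rpower_plus.
     pose proof (J_bound al be n m d u v w Ku Kv Kw p' k Ha Hb Hu Hv Hw ltac:(lia)).
     unfold g in *. assert (0 <= Ku * Kv * Kw) by (repeat apply Rmult_le_pos; lra). nra.
Qed.
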